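(* Let $p$ be a prime, $n\ge1$, $\zeta=\zeta_{p^n}$ a primitive $p^n$th root of unity, $T=\mathbb{Z}_{(p)}[\zeta]$, $t=1-\zeta$ with valuation $v_t$. Then the tuple $\tau=(1-\zeta^j)_{j\in[0,p^n-1]}$ is minimally ordered.
   Context: A tuple $(\xi_0,\dots,\xi_{r-1})$ of pairwise distinct elements of $T$ is minimally ordered if $\sum_{i\in[0,j-1]}v_t(\xi_j-\xi_i)\le\sum_{i\in[0,j-1]}v_t(\xi_k-\xi_i)$ for all $j\in[0,r-1]$ and $k\in[j+1,r-1]$. *)

(* Defs.v *)
From HB Require Import structures.
From mathcomp Require Import all_boot all_order all_algebra all_field.
From Stdlib Require Import ClassicalEpsilon.
Set Implicit Arguments. Unset Strict Implicit. Unset Printing Implicit Defensive.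
Import Order.TTheory GRing.Theory Num.Theory.
Local Open Scope ring_scope.

Definition in_Zp (p : nat) (q : rat) : bool := ~~ (p %| `|denq q|)%N.

Definition inT (p : nat) (zeta : algC) (x : algC) : Prop :=
  exists2 f : {poly rat}, (forall i : nat, in_Zp p f`_i)
                        & x = (map_poly ratr f).[zeta].

Definition tt (zeta : algC) : algC := 1 - zeta.

Definition tdvd (p : nat) (zeta : algC) (k : nat) (x : algC) : Prop :=
  exists2 y, inT p zeta y & x = tt zeta ^+ k * y.

(* v_t(x): the exponent k with t^k | x and t^(k+1) not dividing x in T
   (well defined for nonzero x in the DVR T; arbitrary for x = 0). *)
Definition vt (p : nat) (zeta : algC) (x : algC) : nat :=
  epsilon (inhabits 0%N)
    (fun k => tdvd p zeta k x /\ ~ tdvd p zeta k.+1 x).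

Definition minimally_ordered (p : nat) (zeta : algC) (r : nat)
  (xi : nat -> algC) : Prop :=
  [/\ (forall j, (j < r)%N -> inT p zeta (xi j)),
      (forall i j, (i < r)%N -> (j < r)%N -> i <> j -> xi i <> xi j)
    & (forall j k, (j < k)%N -> (k < r)%N ->
        (\sum_(i < j) vt p zeta (xi j - xi i)%R <=
         \sum_(i < j) vt p zeta (xi k - xi i)%R)%N)].

(* Main.v *)
Require Import Defs.
From HB Require Import structures.
From mathcomp Require Import all_boot all_order all_algebra all_field.
From mathcomp Require Import zify ring lra.
From Stdlib Require Import ClassicalEpsilon.
Import Order.TTheory GRing.Theory Num.Theory.
Set Implicit Arguments. Unset Strict Implicit. Unset Printing Implicit Defensive.

Lemma count_shift (s : pred nat) a j : s 0 -> (forall x y, s x -> s y -> s (x + y)) ->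
  \sum_(i < j) s i.+1 <= \sum_(i < j) s (a + i.+1).
Proof.
move=> s0 sD.
have ex : exists c, s c && (c <= a) by exists 0; rewrite s0.
have bnd : forall c, s c && (c <= a) -> c <= a by move=> c /andP[].
case: (ex_maxnP ex bnd) => c /andP[sc ca] cmax.
set d := a - c.
have hA : forall i, s i.+1 -> d <= i.
  move=> i si; case: (leqP d i) => // hid.
  have h1 : c + i.+1 <= a by rewrite /d in hid; lia.
  have := cmax (c + i.+1); rewrite sD //= h1 => /(_ isT); lia.
have hB : forall i, d <= i -> s i.+1 -> s (a + (i - d).+1).
  move=> i hi si; have -> : a + (i - d).+1 = c + i.+1 by rewrite /d in hi *; lia.
  exact: sD.
have key : forall J, \sum_(0 <= i < J) s i.+1 <= \sum_(0 <= i < J - d) s (a + i.+1).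
  elim => [|J ih]; first by rewrite big_nil.
  rewrite big_nat_recr //=.
  case: (leqP d J) => hdJ.
    have -> : J.+1 - d = (J - d).+1 by lia.
    rewrite big_nat_recr //=; apply: leq_add => //.
    by case: (boolP (s J.+1)) => // sJ; rewrite hB.
  have -> : J.+1 - d = J - d by lia.
  case: (boolP (s J.+1)) => sJ; last by rewrite addn0.
  by have := hA _ sJ; lia.
rewrite -(big_mkord xpredT (fun i => nat_of_bool (s i.+1))).
rewrite -(big_mkord xpredT (fun i => nat_of_bool (s (a + i.+1)))).
apply: (leq_trans (key j)).
rewrite [X in _ <= X](@big_cat_nat _ _ _ (j - d)) //=; first exact: leq_addr.
exact: leq_subr.
Qed.

Local Open Scope ring_scope.

Definition Zq (p : nat) (q : rat) : Prop :=
  exists2 d : nat, ~~ (p %| d)%N & q * d%:R \is a Num.int.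

Lemma in_ZpP p q : in_Zp p q <-> Zq p q.
Proof.
split.
  move=> h; exists `|denq q|%N => //.
  by rewrite pmulrn -[_%:~R]/((Posz _)%:~R) absz_denq -numqE rpred_int.
case=> d hd /intrP[z hz]; apply/negP => hp; case/negP: hd.
apply: (dvdn_trans hp).
have e : numq q * d = z * denq q.
  apply: (@intr_inj rat); rewrite !rmorphM /= numqE -hz.
  by rewrite pmulrn /=; ring.
have : (`|denq q| %| `|numq q| * d)%N.
  by rewrite -[d]/(`|Posz d|%N) -abszM e abszM dvdn_mull.
by rewrite Gauss_dvdr // coprime_sym coprime_num_den.
Qed.


Lemma Zq_int p (z : int) : prime p -> Zq p z%:~R.
Proof.
move=> pp; exists 1%N; first by rewrite dvdn1; apply/eqP => e; move: (prime_gt1 pp); rewrite e.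
by rewrite mulr1 rpred_int.
Qed.

Lemma Zq_add p a b : prime p -> Zq p a -> Zq p b -> Zq p (a + b).
Proof.
move=> pp [d hd ha] [e he hb]; exists (d * e)%N.
  by rewrite Euclid_dvdM // negb_or hd he.
have -> : (a + b) * (d * e)%:R = (a * d%:R) * e%:R + (b * e%:R) * d%:R.
  by rewrite natrM; ring.
by apply: rpredD; apply: rpredM => //; apply: rpred_nat.
Qed.

Lemma Zq_mul p a b : prime p -> Zq p a -> Zq p b -> Zq p (a * b).
Proof.
move=> pp [d hd ha] [e he hb]; exists (d * e)%N.
  by rewrite Euclid_dvdM // negb_or hd he.
have -> : a * b * (d * e)%:R = (a * d%:R) * (b * e%:R) by rewrite natrM; ring.
by rewrite rpredM.
Qed.

Lemma Zq_opp p a : Zq p a -> Zq p (- a).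
Proof. by case=> d hd ha; exists d => //; rewrite mulNr rpredN. Qed.

Lemma inZp_int p (z : int) : prime p -> in_Zp p z%:~R.
Proof. by move=> pp; apply/in_ZpP/Zq_int. Qed.
Lemma inZp_add p a b : prime p -> in_Zp p a -> in_Zp p b -> in_Zp p (a + b).
Proof. by move=> pp /in_ZpP ha /in_ZpP hb; apply/in_ZpP/Zq_add. Qed.
Lemma inZp_mul p a b : prime p -> in_Zp p a -> in_Zp p b -> in_Zp p (a * b).
Proof. by move=> pp /in_ZpP ha /in_ZpP hb; apply/in_ZpP/Zq_mul. Qed.
Lemma inZp_opp p a : in_Zp p a -> in_Zp p (- a).
Proof. by move=> /in_ZpP ha; apply/in_ZpP/Zq_opp. Qed.
Lemma inZp_0 p : prime p -> in_Zp p 0.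
Proof. by move=> pp; apply: (inZp_int 0 pp). Qed.

Lemma inT_add p z x y : prime p -> inT p z x -> inT p z y -> inT p z (x + y).
Proof.
move=> pp [f hf ->] [g hg ->]; exists (f + g); last by rewrite rmorphD hornerD.
by move=> i; rewrite coefD inZp_add.
Qed.

Lemma inT_opp p z x : inT p z x -> inT p z (- x).
Proof.
move=> [f hf ->]; exists (- f); last by rewrite rmorphN hornerN.
by move=> i; rewrite coefN inZp_opp.
Qed.

Lemma inT_sub p z x y : prime p -> inT p z x -> inT p z y -> inT p z (x - y).
Proof. by move=> pp hx hy; apply: inT_add => //; apply: inT_opp. Qed.

Lemma inT_mul p z x y : prime p -> inT p z x -> inT p z y -> inT p z (x * y).
Proof.
move=> pp [f hf ->] [g hg ->]; exists (f * g); last by rewrite rmorphM hornerM.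
move=> i; rewrite coefM; apply: (big_ind (in_Zp p)) => //.
- exact: inZp_0.
- by move=> a b; apply: inZp_add.
- by move=> j _; apply: inZp_mul.
Qed.

Lemma inT_int p z (k : int) : prime p -> inT p z k%:~R.
Proof.
move=> pp; exists (k%:~R)%:P; last by rewrite map_polyC hornerC /= rmorph_int.
by move=> i; rewrite coefC; case: eqP => _; [apply: inZp_int | apply: inZp_0].
Qed.

Lemma inT_nat p z (k : nat) : prime p -> inT p z k%:R.
Proof. by move=> pp; have := inT_int z (k%:Z) pp. Qed.

Lemma inT_1 p z : prime p -> inT p z 1.
Proof. by move=> pp; have := inT_nat z 1 pp. Qed.
Lemma inT_0 p z : prime p -> inT p z 0.
Proof. by move=> pp; have := inT_nat z 0 pp. Qed.

Lemma inT_z p z : prime p -> inT p z z.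
Proof.
move=> pp; exists 'X; last by rewrite map_polyX hornerX.
by move=> i; rewrite coefX; case: eqP => _; [apply: (inZp_int 1) | apply: inZp_0].
Qed.

Lemma inT_exp p z x k : prime p -> inT p z x -> inT p z (x ^+ k).
Proof.
move=> pp hx; elim: k => [|k ih]; first by rewrite expr0; apply: inT_1.
by rewrite exprS; apply: inT_mul.
Qed.

Lemma inT_sum p z n (F : nat -> algC) : prime p ->
  (forall i, (i < n)%N -> inT p z (F i)) -> inT p z (\sum_(i < n) F i).
Proof.
move=> pp h; elim: n h => [|n ih] h; first by rewrite big_ord0; apply: inT_0.
rewrite big_ord_recr /=; apply: inT_add => //; last exact: h.
by apply: ih => i hi; apply: h; lia.
Qed.

Lemma inT_prod p z n (F : nat -> algC) : prime p ->
  (forall i, (i < n)%N -> inT p z (F i)) -> inT p z (\prod_(i < n) F i).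
Proof.
move=> pp h; elim: n h => [|n ih] h; first by rewrite big_ord0; apply: inT_1.
rewrite big_ord_recr /=; apply: inT_mul => //; last exact: h.
by apply: ih => i hi; apply: h; lia.
Qed.

Lemma inT_zexp p z k : prime p -> inT p z (z ^+ k).
Proof. by move=> pp; apply: inT_exp => //; apply: inT_z. Qed.

Lemma inT_t p z : prime p -> inT p z (tt z).
Proof. by move=> pp; rewrite /tt; apply: inT_sub => //; [apply: inT_1 | apply: inT_z]. Qed.


Lemma notT_invp p z N : prime p -> N.-primitive_root z -> ~ inT p z (p%:R^-1).
Proof.
move=> pp prz [f hf e].
pose d := (\prod_(i < size f) `|denq f`_i|)%N.
have hd : ~~ (p %| d)%N.
  rewrite /d; elim: (size f) => [|k ih]; first by rewrite big_ord0 Euclid_dvd1.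
  by rewrite big_ord_recr /= Euclid_dvdM // negb_or ih; apply: hf.
have hdi : forall i : 'I_(size f), f`_i * d%:R \is a Num.int.
  move=> i; rewrite /d (bigD1 i) //= natrM mulrA.
  rewrite pmulrn -[_%:~R]/((Posz _)%:~R) absz_denq -numqE.
  by apply: rpredM; [apply: rpred_int | apply: rpred_nat].
have zA : z \in Aint by apply: Aint_prim_root prz.
have hA : p%:R^-1 * d%:R \in Aint.
  rewrite e horner_coef size_map_poly mulr_suml; apply: rpred_sum => i _.
  rewrite coef_map /= mulrAC -[d%:R]/(d%:R) -(rmorph_nat (ratr : {rmorphism rat -> algC})).
  rewrite -rmorphM /=; apply: rpredM; last by apply: rpredX.
  by case/intrP: (hdi i) => k ->; rewrite rmorph_int Aint_int.
have hQ : p%:R^-1 * d%:R \in Crat.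
  by rewrite rpredM ?rpredV ?rpred_nat.
have hI := Cint_rat_Aint hQ hA.
have : (p%:R^-1 * d%:R : algC) \is a Num.nat.
  by rewrite natrEint hI mulr_ge0 ?invr_ge0 ?ler0n.
case/natrP => m hm.
have pn0 : p%:R != 0 :> algC by rewrite pnatr_eq0 -lt0n prime_gt0.
have : d%:R = (m * p)%:R :> algC.
  by rewrite natrM -hm mulrAC mulVf // mul1r.
move/eqP; rewrite eqr_nat => /eqP hdm; case/negP: hd; rewrite hdm dvdn_mull //.
Qed.


Lemma tdvd_le p z k l x : prime p -> (l <= k)%N -> tdvd p z k x -> tdvd p z l x.
Proof.
move=> pp hlk [y hy ->]; exists (tt z ^+ (k - l) * y).
  by apply: inT_mul => //; apply: inT_exp => //; apply: inT_t.
by rewrite mulrA -exprD subnKC.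
Qed.

Lemma tdvd_mul p z k u x : prime p -> inT p z u -> tdvd p z k x -> tdvd p z k (u * x).
Proof.
move=> pp hu [y hy ->]; exists (u * y); first exact: inT_mul.
by rewrite mulrCA.
Qed.

Lemma tdvd_add p z k x y : prime p -> tdvd p z k x -> tdvd p z k y -> tdvd p z k (x + y).
Proof.
move=> pp [a ha ->] [b hb ->]; exists (a + b); first exact: inT_add.
by rewrite mulrDr.
Qed.

Lemma tdvd0 p z x : inT p z x -> tdvd p z 0 x.
Proof. by move=> hx; exists x => //; rewrite expr0 mul1r. Qed.

Lemma tdvd_zero p z k : prime p -> tdvd p z k 0.
Proof. by move=> pp; exists 0; [apply: inT_0 | rewrite mulr0]. Qed.

Lemma vt_spec p z x k : prime p -> tdvd p z k x -> ~ tdvd p z k.+1 x -> vt p z x = k.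
Proof.
move=> pp h1 h2; rewrite /vt.
set P := fun k => _.
have [] : P (epsilon (inhabits 0%N) P) by apply: epsilon_spec; exists k.
set v := epsilon _ _ => hv1 hv2.
case: (ltngtP v k) => // hvk.
- by case: hv2; apply: (tdvd_le pp _ h1).
- by case: h2; apply: (tdvd_le pp _ hv1).
Qed.

Lemma vt_char p z x K : prime p -> inT p z x -> ~ tdvd p z K x ->
  (vt p z x < K)%N /\ forall k, tdvd p z k x <-> (k <= vt p z x)%N.
Proof.
move=> pp hx hK.
have [k [h1 h2]] : exists k, tdvd p z k x /\ ~ tdvd p z k.+1 x.
  elim: K hK => [|K ih] hK; first by case: hK; apply: tdvd0.
  case: (excluded_middle_informative (tdvd p z K x)) => h.
    by exists K.
  exact: ih.
have -> := vt_spec pp h1 h2; split.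
  by case: (ltnP k K) => // hKk; case: hK; apply: (tdvd_le pp _ h1).
move=> l; split => h.
  by case: (leqP l k) => // hkl; case: h2; apply: (tdvd_le pp _ h).
by apply: (tdvd_le pp _ h1).
Qed.


Lemma p_dvd_bin p n i : prime p -> (0 < i < p ^ n)%N -> (p %| 'C(p ^ n, i))%N.
Proof.
move=> pp /andP[i0 iN].
have e := mul_bin_diag (p ^ n) i.-1.
rewrite prednK // in e.
apply/negPn/negP => hC.
have cop : coprime (p ^ n) 'C(p ^ n, i).
  by apply: coprimeXl; rewrite prime_coprime.
have : (p ^ n %| i * 'C(p ^ n, i))%N by rewrite -e dvdn_mulr.
rewrite Gauss_dvdl // => /(dvdn_leq i0); lia.
Qed.

Lemma tN_p p n z : prime p -> (0 < n)%N -> (p ^ n)%N.-primitive_root z ->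
  exists2 y, inT p z y & tt z ^+ (p ^ n) = p%:R * y.
Proof.
move=> pp n0 prz.
set N := (p ^ n)%N.
have N0 : (0 < N)%N by rewrite expn_gt0 prime_gt0.
have zN : z ^+ N = 1 by apply: prim_expr_order.
have hb : forall i, (0 < i < N)%N -> (p %| 'C(N, i))%N by move=> i; apply: p_dvd_bin.
have hsgn : exists2 c0, inT p z c0 & 1 + (-1) ^+ N = p%:R * c0.
  case: (boolP (p == 2%N)) => [/eqP p2|pn2].
    exists 1; first exact: inT_1.
    rewrite /N p2 -(prednK n0) expnS exprM sqrrN !expr1n mulr1 mulr2n; by [].
  have [p2|po] := even_prime pp; first by rewrite p2 in pn2.
  exists 0; first exact: inT_0.
  by rewrite -signr_odd /N oddX po orbT expr1 mulr0 addrN.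
clearbody N; case: N N0 zN hb hsgn => // M _ zN hb hsgn.
rewrite /tt exprBn.
rewrite big_ord_recl big_ord_recr /=.
have hm : \sum_(i < M)
       (-1) ^+ bump 0 i * 1 ^+ (M.+1 - bump 0 i) * z ^+ bump 0 i *+
       'C(M.+1, bump 0 i) = p%:R * \sum_(i < M)
       ((-1) ^+ i.+1 * z ^+ i.+1 *+ ('C(M.+1, i.+1) %/ p)).
  rewrite mulr_sumr; apply: eq_bigr => i _.
  have h : (p %| 'C(M.+1, i.+1))%N by apply: hb; have := ltn_ord i; lia.
  rewrite /bump /= add1n expr1n mulr1.
  by rewrite -{1}(divnK h) mulrnA mulr_natl.
rewrite hm; case: hsgn => c0 hc0 e0.
exists (c0 + \sum_(i < M) ((-1) ^+ i.+1 * z ^+ i.+1 *+ ('C(M.+1, i.+1) %/ p))).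
  apply: inT_add => //.
  apply: (inT_sum (F := fun i : nat => (-1) ^+ i.+1 * z ^+ i.+1 *+ ('C(M.+1, i.+1) %/ p))) => // i _.
  rewrite -mulr_natl; apply: inT_mul => //; first exact: inT_nat.
  apply: inT_mul => //; last exact: inT_zexp.
  by apply: inT_exp => //; apply: (inT_int z (-1)).
rewrite mulrDr -e0 /bump /= add1n zN bin0 binn subnn !expr0 !expr1n !mulr1.
by rewrite mulr1n addrA [1 + _]addrC -addrA [_ + (-1) ^+ _]addrC addrA [_ + 1]addrC.
Qed.


Lemma prod_one_sub p (eta : algC) : prime p -> p.-primitive_root eta ->
  \prod_(1 <= i < p) (1 - eta ^+ i) = p%:R.
Proof.
move=> pp pr.
have h := factor_Xn_sub_1 pr.
rewrite big_ltn ?prime_gt0 // expr0 subrX1 polyC1 in h.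
have nz : ('X - 1 : {poly algC}) != 0 by rewrite -polyC1 polyXsubC_eq0.
have h2 := mulfI nz h.
have := congr1 (fun q : {poly algC} => q.[1]) h2.
rewrite /= horner_prod horner_sum.
under eq_bigr do rewrite hornerXsubC.
under [in RHS]eq_bigr do rewrite hornerXn expr1n.
by rewrite sumr_const card_ord => ->.
Qed.

Lemma one_sub_pow (w : algC) k : 1 - w ^+ k = (1 - w) * \sum_(j < k) w ^+ j.
Proof. by rewrite -opprB subrX1 -mulNr opprB. Qed.

Lemma inT_bigprod p z (I : Type) (r : seq I) (P : pred I) (F : I -> algC) :
  prime p -> (forall i, P i -> inT p z (F i)) -> inT p z (\prod_(i <- r | P i) F i).
Proof.
move=> pp h; apply: (big_ind (inT p z)) => //; first exact: inT_1.
by move=> a b; apply: inT_mul.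
Qed.

Lemma inT_bigsum p z (I : Type) (r : seq I) (P : pred I) (F : I -> algC) :
  prime p -> (forall i, P i -> inT p z (F i)) -> inT p z (\sum_(i <- r | P i) F i).
Proof.
move=> pp h; apply: (big_ind (inT p z)) => //; first exact: inT_0.
by move=> a b; apply: inT_add.
Qed.

Lemma p_factor p n z m : prime p -> (0 < n)%N -> (p ^ n)%N.-primitive_root z ->
  (0 < m < p ^ n)%N ->
  exists2 s, inT p z s & p%:R = (1 - z ^+ m) ^+ p.-1 * s.
Proof.
move=> pp n0 prz /andP[m0 mN].
set N := (p ^ n)%N.
have N0 : (0 < N)%N by rewrite expn_gt0 prime_gt0.
set w := z ^+ m.
have wN : w ^+ N = 1.
  by rewrite /w exprAC (prim_expr_order prz) expr1n.
have [k prw kN] := prim_order_exists N0 wN.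
case/(dvdn_pfactor _ _ pp): kN => e _ ke.
case: e ke => [|e] ke.
  move: prw; rewrite ke expn0 => /prim_expr_order; rewrite expr1 /w => h.
  have := eq_prim_root_expr prz m 0; rewrite h expr0 eqxx modn_small //.
  by rewrite mod0n; lia.
have pk : (p %| k)%N by rewrite ke expnS dvdn_mulr.
have pre := dvdn_prim_root prw pk.
have := prod_one_sub pp pre.
rewrite ke expnS mulKn ?prime_gt0 // => <-.
exists (\prod_(1 <= i < p) \sum_(j < p ^ e * i) w ^+ j).
  apply: inT_bigprod => // i _; apply: inT_bigsum => // j _.
  by rewrite /w -exprM; apply: inT_zexp.
under eq_bigr do rewrite -exprM one_sub_pow.
by rewrite big_split /= prodr_const_nat subn1.
Qed.


Lemma inT_xi p (z : algC) m : prime p -> inT p z (1 - z ^+ m).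
Proof. by move=> pp; apply: inT_sub => //; [apply: inT_1 | apply: inT_zexp]. Qed.

Lemma not_tdvd p n (z : algC) m : prime p -> (0 < n)%N -> (p ^ n)%N.-primitive_root z ->
  (0 < m < p ^ n)%N -> ~ tdvd p z (p ^ n + p ^ n) (1 - z ^+ m).
Proof.
move=> pp n0 prz hm [y hy ex].
have [s hs hps] := p_factor pp n0 prz hm.
have [u hu htN] := tN_p pp n0 prz.
have [q p1] : exists q, p.-1 = q.+1 by exists p.-2; have := prime_gt1 pp; lia.
have pn0 : p%:R != 0 :> algC by rewrite pnatr_eq0 -lt0n prime_gt0.
apply: (notT_invp pp prz).
have e : p%:R * (p%:R * (u ^+ 2 * y * (1 - z ^+ m) ^+ q * s)) = p%:R :> algC.
  have hx : 1 - z ^+ m = p%:R ^+ 2 * (u ^+ 2 * y) by rewrite ex exprD htN; ring.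
  rewrite [in RHS]hps p1 [(1 - z ^+ m) ^+ q.+1]exprS {2}hx; ring.
have e2 : p%:R * (u ^+ 2 * y * (1 - z ^+ m) ^+ q * s) = 1 :> algC.
  by apply: (mulfI pn0); rewrite e mulr1.
have -> : p%:R^-1 = u ^+ 2 * y * (1 - z ^+ m) ^+ q * s.
  by apply: (mulfI pn0); rewrite e2 mulfV.
apply: inT_mul => //; apply: inT_mul => //; last by apply: inT_exp => //; apply: inT_xi.
by apply: inT_mul => //; apply: inT_exp.
Qed.

Lemma vt_xi p n (z : algC) m : prime p -> (0 < n)%N -> (p ^ n)%N.-primitive_root z ->
  (0 < m < p ^ n)%N ->
  (vt p z (1 - z ^+ m)%R < p ^ n + p ^ n)%N /\
  forall k, tdvd p z k (1 - z ^+ m) <-> (k <= vt p z (1 - z ^+ m)%R)%N.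
Proof.
move=> pp n0 prz hm; apply: vt_char => //; first exact: inT_xi.
exact: not_tdvd.
Qed.


Definition asb (P : Prop) : bool := if excluded_middle_informative P then true else false.
Lemma asbP (P : Prop) : reflect P (asb P).
Proof. by rewrite /asb; case: excluded_middle_informative => h; constructor. Qed.

Lemma sum_lt v B : (v <= B)%N -> (\sum_(k < B) (k < v)%N)%N = v.
Proof.
elim: B => [|B ih] h; first by rewrite big_ord0; lia.
rewrite big_ord_recr /=; case: (leqP v B) => hv.
  by rewrite ih // addn0.
have -> : v = B.+1 by lia.
rewrite addn1; congr _.+1.
rewrite (eq_bigr (fun _ => 1%N)); last by move=> i _; rewrite ltnS ltnW.
by rewrite sum_nat_const card_ord muln1.
Qed.

Lemma vt_unit p n (z : algC) i m : prime p -> (0 < n)%N -> (p ^ n)%N.-primitive_root z ->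
  (0 < m < p ^ n)%N ->
  vt p z (z ^+ i * (1 - z ^+ m)) = vt p z (1 - z ^+ m).
Proof.
move=> pp n0 prz hm.
have [_ hc] := vt_xi pp n0 prz hm.
apply: vt_spec => //.
  by apply: tdvd_mul => //; [apply: inT_zexp | apply/hc].
move=> h; set v := vt p z (1 - z ^+ m) in hc h *.
have : tdvd p z v.+1 (1 - z ^+ m).
  have -> : 1 - z ^+ m = z ^+ ((p ^ n) * i - i)%N * (z ^+ i * (1 - z ^+ m)).
    rewrite mulrA -exprD subnK; last by rewrite leq_pmull // expn_gt0 prime_gt0.
    by rewrite exprM (prim_expr_order prz) expr1n mul1r.
  by apply: tdvd_mul => //; apply: inT_zexp.
by move/hc; rewrite ltnn.
Qed.


Theorem lemma3p14 (p n : nat) (zeta : algC) :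
  prime p -> (0 < n)%N -> (p ^ n)%N.-primitive_root zeta ->
  minimally_ordered p zeta (p ^ n) (fun j : nat => 1 - zeta ^+ j).
Proof.
move=> pp n0 prz.
set N := (p ^ n)%N.
pose S (k : nat) : pred nat := fun m => asb (tdvd p zeta k.+1 (1 - zeta ^+ m)).
have S0 : forall k, S k 0%N.
  by move=> k; apply/asbP; rewrite expr0 subrr; apply: tdvd_zero.
have SD : forall k x y, S k x -> S k y -> S k (x + y)%N.
  move=> k x y /asbP hx /asbP hy; apply/asbP.
  have -> : 1 - zeta ^+ (x + y) = (1 - zeta ^+ x) + zeta ^+ x * (1 - zeta ^+ y).
    by rewrite exprD; ring.
  by apply: tdvd_add => //; apply: tdvd_mul => //; apply: inT_zexp.
have hf : forall i j, (i < j < N)%N ->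
    vt p zeta ((1 - zeta ^+ j) - (1 - zeta ^+ i))%R = (\sum_(k < N + N) S k (j - i))%N.
  move=> i j /andP[ij jN].
  have hm : (0 < j - i < p ^ n)%N by rewrite /N in jN; lia.
  have -> : (1 - zeta ^+ j) - (1 - zeta ^+ i) = zeta ^+ i * (1 - zeta ^+ (j - i)).
    by rewrite mulrBr mulr1 -exprD subnKC ?(ltnW ij) //; ring.
  rewrite (vt_unit _ pp n0 prz hm).
  have [hlt hc] := vt_xi pp n0 prz hm.
  rewrite -[LHS](sum_lt (ltnW hlt)); apply: eq_bigr => k _.
  by congr nat_of_bool; apply/idP/asbP => h; apply/hc.
split.
- by move=> j _; apply: inT_xi.
- move=> i j iN jN ij e.
  have : zeta ^+ i == zeta ^+ j by apply/eqP; apply: oppr_inj; apply: (addrI 1).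
  rewrite (eq_prim_root_expr prz) !modn_small // => /eqP; exact: ij.
move=> j k jk kN.
have e1 : (\sum_(i < j) vt p zeta ((1 - zeta ^+ j) - (1 - zeta ^+ i))%R =
           \sum_(i < j) \sum_(l < N + N) S l (j - i))%N.
  by apply: eq_bigr => i _; rewrite hf // ltn_ord /= (ltn_trans jk kN).
have e2 : (\sum_(i < j) vt p zeta ((1 - zeta ^+ k) - (1 - zeta ^+ i))%R =
           \sum_(i < j) \sum_(l < N + N) S l (k - i))%N.
  by apply: eq_bigr => i _; rewrite hf // kN (ltn_trans (ltn_ord i) jk).
rewrite e1 e2 exchange_big [X in (_ <= X)%N]exchange_big /=.
apply: leq_sum => l _.
rewrite [X in (X <= _)%N](reindex_inj rev_ord_inj) [X in (_ <= X)%N](reindex_inj rev_ord_inj) /=.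
have := count_shift (k - j) j (S0 l) (SD l).
congr (_ <= _)%N; apply: eq_bigr => i _; congr (nat_of_bool (S l _)).
  by have := ltn_ord i; lia.
by have := ltn_ord i; lia.
Qed.
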